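(* Let $k\ge2$ and $\ell\ge1$. The length of the longest strictly decreasing subsequence of the permutation $Z_k(\ell)$ is $(k+1)k^{\ell/2-1}-1$ if $\ell$ is even, and $2k^{(\ell-1)/2}-1$ if $\ell$ is odd.
   Context: $Z_k(\ell)$ is the permutation of $\{1,\dots,k^\ell\}$ whose $p$-th entry (for $p=1,\dots,k^\ell$) is $1+\mathrm{rev}_{k,\ell}(p-1)$, where $\mathrm{rev}_{k,\ell}(x)$ is the integer whose $\ell$-digit (zero-padded) base-$k$ representation is the reversal of that of $x$. Equivalently, $Z_k(\ell)$ is the stable configuration (read left to right on layer $\ell+1$) of labeled chip-firing on the infinite rooted directed $k$-ary tree starting from chips $1,\dots,k^\ell$ at the root, under the strategy where each vertex holding chips $c_1<\cdots<c_{kq}$ fires the consecutive $k$-tuples $(c_1,\dots,c_k),(c_{k+1},\dots,c_{2k}),\dots$; in a firing the $i$-th smallest chip of the fired $k$-tuple goes to the $i$-th leftmost child. *)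

(* Defs.v *)
From mathcomp Require Import all_boot.
Set Implicit Arguments. Unset Strict Implicit. Unset Printing Implicit Defensive.

Definition digit (k i x : nat) : nat := (x %/ k ^ i) %% k.

(* rev_{k,l}(x): integer whose l-digit (zero-padded) base-k representation is
   the reversal of that of x:  digit i of x becomes digit (l-1-i). *)
Definition rev_digits (k l x : nat) : nat :=
  \sum_(i < l) digit k i x * k ^ (l.-1 - i).

(* Z_k(l) as the sequence of its entries: p-th entry (p = 1..k^l) is
   1 + rev_{k,l}(p-1). *)
Definition Zperm (k l : nat) : seq nat :=
  [seq (rev_digits k l x).+1 | x <- iota 0 (k ^ l)].

Definition is_dec_subseq (t s : seq nat) : bool :=
  subseq t s && sorted (fun a b => b < a) t.

Definition lds_length (s : seq nat) (L : nat) : Prop :=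
  (exists t, is_dec_subseq t s /\ size t = L) /\
  (forall t, is_dec_subseq t s -> size t <= L).

(* Main.v *)
Require Import Defs.
From mathcomp Require Import all_boot zify.
Set Implicit Arguments. Unset Strict Implicit. Unset Printing Implicit Defensive.

Section Rev.
Variable k : nat.
Hypothesis hk : 2 <= k.
Notation revd := (rev_digits k).

Lemma k_gt0 : 0 < k. Proof. lia. Qed.
Lemma expk_gt0 n : 0 < k ^ n. Proof. by rewrite expn_gt0 k_gt0. Qed.

Lemma revd0 x : revd 0 x = 0.
Proof. by rewrite /rev_digits big_ord0. Qed.

Lemma revS l x : revd l.+1 x = revd l (x %/ k) + k ^ l * (x %% k).
Proof.
rewrite /rev_digits big_ord_recl /= addnC; congr (_ + _).
  apply: eq_bigr => i _; rewrite /digit /bump /= add1n expnS divnMA.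
  congr (_ * k ^ _); lia.
by rewrite /digit expn0 divn1 subn0 mulnC.
Qed.

Lemma rev_lt l x : revd l x < k ^ l.
Proof.
elim: l x => [|l IH] x; first by rewrite revd0 expn0.
rewrite revS expnS.
have h1 := IH (x %/ k).
have h2 : x %% k <= k.-1 by rewrite -ltnS prednK ?ltn_mod ?k_gt0.
have h3 : k ^ l * (x %% k) <= k ^ l * k.-1 by rewrite leq_mul2l h2 orbT.
have h4 : k ^ l * k.-1 + k ^ l = k * k ^ l.
  by rewrite -{2}(muln1 (k ^ l)) -mulnDr addn1 prednK ?k_gt0 // mulnC.
lia.
Qed.

Lemma rev_split a b x :
  revd (a + b) x = revd a (x %/ k ^ b) + k ^ a * revd b (x %% k ^ b).
Proof.
elim: b x => [|b IH] x.
  by rewrite addn0 revd0 expn0 divn1 muln0 addn0.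
rewrite addnS revS IH revS -divnMA -expnS.
rewrite modn_divl -expnSr modn_dvdm ?dvdn_exp //.
rewrite mulnDr expnD mulnA; lia.
Qed.

Lemma rev1 c : c < k -> revd 1 c = c.
Proof. by move=> hc; rewrite revS revd0 expn0 mul1n modn_small. Qed.

Lemma rev_inv l x : x < k ^ l -> revd l (revd l x) = x.
Proof.
elim: l x => [|l IH] x hx.
  by rewrite revd0; move: hx; rewrite expn0; case: x.
have hr := rev_lt l (x %/ k).
have e : revd l.+1 x = (x %% k) * k ^ l + revd l (x %/ k).
  by rewrite revS addnC mulnC.
rewrite e -(add1n l) rev_split.
have h1 : (x %% k * k ^ l + revd l (x %/ k)) %/ k ^ l = x %% k.
  by rewrite divnMDl ?expk_gt0 // divn_small // addn0.
have h2 : (x %% k * k ^ l + revd l (x %/ k)) %% k ^ l = revd l (x %/ k).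
  by rewrite -modnDml modnMl add0n modn_small.
rewrite h1 h2 rev1 ?ltn_mod ?k_gt0 // expn1 IH; last first.
  by rewrite ltn_divLR ?k_gt0 // -expnSr.
by rewrite addnC mulnC -divn_eq.
Qed.

Lemma rev_dec A B x :
  revd (A.+1 + B) x =
  revd A (x %/ k ^ B %/ k) + k ^ A * (x %/ k ^ B %% k) + k ^ A.+1 * revd B (x %% k ^ B).
Proof. by rewrite rev_split revS. Qed.

Lemma low_lt A z : revd A (z %/ k) + k ^ A * (z %% k) < k ^ A.+1.
Proof.
have h1 := rev_lt A (z %/ k).
have h2 : z %% k <= k.-1 by rewrite -ltnS prednK ?ltn_mod ?k_gt0.
have h3 : k ^ A * (z %% k) <= k ^ A * k.-1 by rewrite leq_mul2l h2 orbT.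
have h4 : k ^ A * k.-1 + k ^ A = k ^ A.+1.
  by rewrite -{2}(muln1 (k ^ A)) -mulnDr addn1 prednK ?k_gt0 // expnS mulnC.
lia.
Qed.

Lemma rev_top A B x : revd (A.+1 + B) x %/ k ^ A.+1 = revd B (x %% k ^ B).
Proof.
rewrite rev_dec [k ^ A.+1 * _]mulnC addnC divnMDl ?expk_gt0 // divn_small ?addn0 //.
exact: low_lt.
Qed.

Definition Phi A B x :=
  x %/ k ^ B.+1 + k ^ B - revd (A.+1 + B) x %/ k ^ A.+1.

Lemma Phi_lt A B x : x < k ^ (A.+1 + B) -> Phi A B x < k ^ A + k ^ B.
Proof.
move=> hx; rewrite /Phi rev_top.
have : x %/ k ^ B.+1 < k ^ A.
  by rewrite ltn_divLR ?expk_gt0 // -expnD -addSnnS.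
lia.
Qed.

Lemma Phi_incr A B x x' : x < x' -> revd (A.+1 + B) x' < revd (A.+1 + B) x ->
  Phi A B x < Phi A B x'.
Proof.
move=> hx hr; rewrite /Phi !rev_top.
have hK := expk_gt0 B.
have r1 := rev_lt B (x %% k ^ B).
have r2 := rev_lt B (x' %% k ^ B).
have q1 : x %/ k ^ B.+1 <= x' %/ k ^ B.+1 by apply: leq_div2r; apply: ltnW.
have q2 : revd B (x' %% k ^ B) <= revd B (x %% k ^ B).
  by rewrite -!(rev_top A); apply: leq_div2r; apply: ltnW.
suff : ~ (x %/ k ^ B.+1 = x' %/ k ^ B.+1 /\ revd B (x %% k ^ B) = revd B (x' %% k ^ B)).
  move: q1 q2 r1 r2; move: (x %/ k ^ B.+1) (x' %/ k ^ B.+1) (revd B (x %% k ^ B))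
    (revd B (x' %% k ^ B)) (k ^ B) => a a' b b' K; clear; lia.
case=> e1 e2.
have em : x %% k ^ B = x' %% k ^ B.
  by rewrite -(rev_inv (ltn_pmod x hK)) e2 rev_inv ?ltn_pmod.
rewrite expnSr !divnMA in e1.
set z := x %/ k ^ B in e1; set z' := x' %/ k ^ B in e1.
have ex : x = z * k ^ B + x %% k ^ B by apply: divn_eq.
have ex' : x' = z' * k ^ B + x' %% k ^ B by apply: divn_eq.
have hz : z < z'.
  by rewrite -(ltn_pmul2r hK) -(ltn_add2r (x' %% k ^ B)) -ex' -em -ex.
have ez := divn_eq z k; have ez' := divn_eq z' k.
have ha : z %% k < z' %% k.
  have : z %/ k * k + z %% k < z' %/ k * k + z' %% k by rewrite -ez -ez'.
  by rewrite e1 ltn_add2l.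
move: hr; rewrite !rev_dec -/z -/z' e1 em.
have : k ^ A * (z %% k) < k ^ A * (z' %% k) by rewrite ltn_pmul2l ?expk_gt0.
move: (k ^ A * (z %% k)) (k ^ A * (z' %% k)) => u u'.
move: (revd A (z' %/ k)) (k ^ A.+1 * revd B (x' %% k ^ B)) => v w.
clear; lia.
Qed.

Lemma sorted_ltn_subseq (s1 s2 : seq nat) :
  sorted ltn s1 -> sorted ltn s2 -> {subset s1 <= s2} -> subseq s1 s2.
Proof.
elim: s2 s1 => [|y s2 IH] [|x s1] //=.
  by move=> _ _ /(_ x); rewrite inE eqxx => /(_ isT).
move=> h1 h2 hsub.
have hy := order_path_min ltn_trans h2.
have hx := order_path_min ltn_trans h1.
have s1s := path_sorted h1; have s2s := path_sorted h2.
case: eqP => [exy|nxy].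
  apply: IH => // z hz.
  have : z \in y :: s2 by apply: hsub; rewrite inE hz orbT.
  rewrite inE => /orP [/eqP ezy|//].
  by move/allP: hx => /(_ z hz); rewrite ezy exy ltnn.
apply: IH => //=.
move=> z; rewrite inE => /orP [/eqP ->|hz].
  have : x \in y :: s2 by apply: hsub; rewrite inE eqxx.
  by rewrite inE => /orP [/eqP //|//].
have : z \in y :: s2 by apply: hsub; rewrite inE hz orbT.
rewrite inE => /orP [/eqP ezy|//].
have hxz : x < z by move/allP: hx => /(_ z hz).
have : x \in y :: s2 by apply: hsub; rewrite inE eqxx.
rewrite inE => /orP [/eqP //|hxs2].
by move/allP: hy => /(_ x hxs2); rewrite -ezy => hyx; move: (ltn_trans hyx hxz); rewrite ltnn.
Qed.

Lemma iota_sorted_rel (r : rel nat) a n :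
  (forall i, a <= i -> i.+1 < a + n -> r i i.+1) -> sorted r (iota a n).
Proof.
elim: n a => [|n IH] a h //=.
case: n IH h => [|n] IH h //=.
rewrite (h a) ?leqnn ?addnS ?addn0 //=.
have := IH a.+1; rewrite /= => -> // i hi hin; apply: h; lia.
lia.
Qed.

Lemma upper A B t : is_dec_subseq t (Zperm k (A.+1 + B)) -> size t <= k ^ A + k ^ B - 1.
Proof.
move=> /andP [hs hd]; case/subseqP: hs => m _ et.
rewrite /Zperm -map_mask in et.
set xs := mask m (iota 0 _) in et.
have hxs : sorted ltn xs := subseq_sorted ltn_trans (mask_subseq _ _) (iota_ltn_sorted _ _).
rewrite et sorted_map in hd.
have hphi : sorted ltn (map (Phi A B) xs).
  rewrite sorted_map.
  have : sorted [rel x y | (x < y) && relpre (fun x => (revd (A.+1 + B) x).+1)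
      (fun a b => b < a) x y] xs by rewrite sorted_relI hxs hd.
  apply: sub_sorted => x y /andP [h1 h2]; exact: Phi_incr h1 h2.
have hu : uniq (map (Phi A B) xs) := sorted_uniq ltn_trans ltnn hphi.
have : size (map (Phi A B) xs) <= size (iota 1 (k ^ A + k ^ B - 1)).
  apply: uniq_leq_size => // y /mapP [x hx ->]; rewrite mem_iota.
  have hxl : x < k ^ (A.+1 + B) by move: (mem_mask hx); rewrite mem_iota.
  have h1 := Phi_lt hxl; have h2 := rev_lt B (x %% k ^ B).
  rewrite /Phi rev_top in h1 *; move: h1 h2.
  move: (x %/ k ^ B.+1) (revd B (x %% k ^ B)) (k ^ A) (k ^ B) => a b KA K; clear; lia.
by rewrite size_map size_iota et size_map.
Qed.

Lemma lower l N g :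
  (forall t, t.+1 < N -> g t < g t.+1 /\ revd l (g t.+1) < revd l (g t)) ->
  (forall t, t < N -> g t < k ^ l) ->
  exists w, is_dec_subseq w (Zperm k l) /\ size w = N.
Proof.
move=> hstep hrange.
exists (map (fun x => (revd l x).+1) (map g (iota 0 N))).
rewrite !size_map size_iota; split => //; apply/andP; split.
  apply: map_subseq; apply: sorted_ltn_subseq.
  - rewrite sorted_map; apply: iota_sorted_rel => i _ hi; exact: (hstep i hi).1.
  - exact: iota_ltn_sorted.
  - by move=> y /mapP [x]; rewrite !mem_iota /= => hx ->; apply: hrange.
rewrite -map_comp sorted_map; apply: iota_sorted_rel => i _ hi.
by rewrite /= ltnS; exact: (hstep i hi).2.
Qed.

Definition enc B p c q := p * k ^ B.+1 + c * k ^ B + revd B q.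

Lemma encE B p c q : enc B p c q = (p * k + c) * k ^ B + revd B q.
Proof. by rewrite /enc expnS mulnA mulnDl. Qed.

Lemma dm d j r : r < d -> (j * d + r) %/ d = j /\ (j * d + r) %% d = r.
Proof.
move=> hr; have hd : 0 < d by lia.
by rewrite divnMDl // divn_small // addn0 modnMDl modn_small.
Qed.

Lemma enc_rev A B p c q : c < k -> q < k ^ B ->
  revd (A.+1 + B) (enc B p c q) = revd A p + k ^ A * c + k ^ A.+1 * q.
Proof.
move=> hc hq; rewrite rev_dec encE.
have [e1 e2] := dm (p * k + c) (rev_lt B q).
rewrite e1 e2 rev_inv //.
by have [-> ->] := dm p hc.
Qed.

Lemma enc_bounds B p c q :
  (p * k + c) * k ^ B <= enc B p c q /\ enc B p c q < (p * k + c).+1 * k ^ B.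
Proof.
rewrite encE mulSn; have := rev_lt B q.
move: ((p * k + c) * k ^ B) (revd B q) (k ^ B) => a b K; lia.
Qed.

Lemma enc_lt A B p c q : p < k ^ A -> c < k -> enc B p c q < k ^ (A.+1 + B).
Proof.
move=> hp hc; have [_ h] := enc_bounds B p c q.
apply: (leq_trans h); rewrite expnD leq_mul2r; apply/orP; right.
rewrite expnS.
have : p.+1 * k <= k ^ A * k by rewrite leq_mul2r hp orbT.
rewrite mulSn; lia.
Qed.

Lemma enc_le B p c p' c' q q' : (p * k + c).+1 <= p' * k + c' ->
  enc B p c q < enc B p' c' q'.
Proof.
move=> h; have [_ h1] := enc_bounds B p c q; have [h2 _] := enc_bounds B p' c' q'.
apply: (leq_trans h1); apply: leq_trans h2; by rewrite leq_mul2r h orbT.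
Qed.

Lemma stepP A B p c c' q : c' < c -> c < k -> q < k ^ B ->
  enc B p c q < enc B p.+1 c' q /\
  revd (A.+1 + B) (enc B p.+1 c' q) < revd (A.+1 + B) (enc B p c q).
Proof.
move=> h1 h2 h3; split.
  by apply: enc_le; rewrite mulSn; lia.
rewrite !enc_rev //; last by lia.
have := rev_lt A p.+1.
have : k ^ A * c'.+1 <= k ^ A * c by rewrite leq_mul2l h1 orbT.
rewrite mulnS.
move: (k ^ A * c') (k ^ A * c) (k ^ A) (revd A p.+1) (revd A p) (k ^ A.+1 * q) => a b K x y z.
clear; lia.
Qed.

Lemma carry A p : p %% k = k.-1 -> revd A.+1 p.+1 < revd A.+1 p.
Proof.
move=> hp; rewrite !revS.
have -> : p.+1 %% k = 0.
  have -> : p.+1 = (p %/ k).+1 * k.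
    by rewrite {1}(divn_eq p k) hp mulSn; lia.
  by rewrite modnMl.
rewrite muln0 addn0 hp.
have := rev_lt A (p.+1 %/ k).
have : k ^ A * 1 <= k ^ A * k.-1 by rewrite leq_mul2l; apply/orP; right; lia.
rewrite muln1; lia.
Qed.

Lemma stepC A B p c q : p %% k = k.-1 -> c < k -> q < k ^ B ->
  enc B p c q < enc B p.+1 c q /\
  revd (A.+2 + B) (enc B p.+1 c q) < revd (A.+2 + B) (enc B p c q).
Proof.
move=> h1 h2 h3; split.
  by apply: enc_le; rewrite mulSn; lia.
rewrite !enc_rev //.
have := carry A h1; lia.
Qed.

Lemma stepQ A B p c c' q : c < c' -> c' < k -> 0 < q -> q < k ^ B ->
  enc B p c q < enc B p c' q.-1 /\
  revd (A.+1 + B) (enc B p c' q.-1) < revd (A.+1 + B) (enc B p c q).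
Proof.
move=> h1 h2 h3 h4; split.
  by apply: enc_le; lia.
rewrite !enc_rev //; last by lia.
have : k ^ A * c' < k ^ A * k by rewrite ltn_pmul2l ?expk_gt0.
rewrite -expnSr.
have -> : k ^ A.+1 * q = k ^ A.+1 * q.-1 + k ^ A.+1.
  by rewrite -{1}(prednK h3) mulnS addnC.
move: (k ^ A * c') (k ^ A * c) (k ^ A.+1) (k ^ A.+1 * q.-1) (revd A p) => a b K z y.
clear; lia.
lia.
Qed.

Lemma lower_blocks l d N (G : nat -> nat -> nat) : 0 < d ->
  (forall j r, r.+1 < d -> (j * d + r).+1 < N ->
     G j r < G j r.+1 /\ revd l (G j r.+1) < revd l (G j r)) ->
  (forall j, j.+1 * d < N ->
     G j d.-1 < G j.+1 0 /\ revd l (G j.+1 0) < revd l (G j d.-1)) ->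
  (forall j r, r < d -> j * d + r < N -> G j r < k ^ l) ->
  exists w, is_dec_subseq w (Zperm k l) /\ size w = N.
Proof.
move=> hd hin hbd hr; apply: (@lower l N (fun t => G (t %/ d) (t %% d))).
  move=> t ht; have et := divn_eq t d; have hm := ltn_pmod t hd.
  move: et hm; set j := t %/ d; set r := t %% d => et hm.
  case: (ltnP r.+1 d) => hrd.
    have et1 : t.+1 = j * d + r.+1 by rewrite {1}et addnS.
    rewrite et1; have [-> ->] := dm j hrd; apply: hin => //.
    by rewrite -addnS -et1.
  have e1 : r.+1 = d by apply/eqP; rewrite eqn_leq hm hrd.
  have er : r = d.-1 by rewrite -e1.
  have et1 : t.+1 = j.+1 * d + 0 by rewrite addn0 mulSn {1}et er addnC -addSn prednK.
  rewrite et1; have [-> ->] := dm j.+1 hd; rewrite er; apply: hbd.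
  by rewrite -(addn0 (j.+1 * d)) -et1.
move=> t ht; apply: hr; [exact: ltn_pmod | by rewrite -divn_eq].
Qed.

Lemma odd_case m :
  exists w, is_dec_subseq w (Zperm k (m.+1 + m)) /\ size w = k ^ m + k ^ m - 1.
Proof.
have hK := expk_gt0 m.
apply: (@lower_blocks _ 2 _ (fun j r => if r == 0 then enc m j 1 ((k ^ m).-1 - j)
                                      else enc m j.+1 0 ((k ^ m).-1 - j))) => //.
- move=> j r hr _; have -> : r = 0 by lia.
  by apply: stepP => //; lia.
- move=> j hj /=.
  rewrite subnS; apply: stepQ => //; lia.
- move=> j r hr hjr; case: eqP => er.
  + by apply: enc_lt; lia.
  + by apply: enc_lt => //; lia.
Qed.

Lemma even_case B :
  exists w, is_dec_subseq w (Zperm k (B.+2 + B)) /\ size w = k ^ B.+1 + k ^ B - 1.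
Proof.
have hK := expk_gt0 B.
have eA : k ^ B.+1 = k ^ B * k by rewrite expnSr.
apply: (@lower_blocks _ k.+1 _ (fun j r => if r < k then enc B (k * j + r) (k.-1 - r) ((k ^ B).-1 - j)
               else enc B (k * j + k.-1) k.-1 ((k ^ B).-1 - j).-1)) => //.
- move=> j r hr hN; rewrite ltnS in hr; rewrite hr.
  case: (ltnP r.+1 k) => hr1.
    rewrite (addnS (k * j) r); apply: stepP => //; lia.
  have er : r = k.-1 by lia.
  rewrite er subnn.
  have hj : j.+1 < k ^ B.
    rewrite -(ltn_pmul2r (ltn0Sn k)).
    rewrite mulSnr (mulnSr (k ^ B) k); move: hN; rewrite eA er.
    move: (j * k.+1) (k ^ B * k) => a b; lia.
  apply: stepQ => //; lia.
- move=> j hj /=; rewrite ltnn k_gt0 addn0 subn0 subnS.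
  have -> : k * j.+1 = (k * j + k.-1).+1 by rewrite mulnS; lia.
  have hjB : j.+1 < k ^ B.
    rewrite -(ltn_pmul2r (ltn0Sn k)).
    rewrite mulSnr (mulnSr (k ^ B) k); move: hj; rewrite eA mulSnr.
    move: (j * k.+1) (k ^ B * k) => a b; lia.
  apply: stepC => //; try lia.
  have hk1 : k.-1 < k by rewrite ltn_predL k_gt0.
  by rewrite mulnC; have [_ ->] := dm j hk1.
- move=> j r hr hjr.
  have hj : j < k ^ B.
    rewrite -(ltn_pmul2r (ltn0Sn k)).
    rewrite (mulnSr (k ^ B) k); move: hjr; rewrite eA.
    move: (j * k.+1) (k ^ B * k) => a b; lia.
  have hp : k * j + k.-1 < k ^ B.+1.
    rewrite eA mulnC; have : j.+1 * k <= k ^ B * k by rewrite leq_mul2r hj orbT.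
    rewrite mulSn; lia.
  case: (ltnP r k) => hrk.
  + apply: enc_lt; lia.
  + apply: enc_lt; lia.
Qed.
End Rev.

Theorem theorem7p3 (k l : nat) (hk : 2 <= k) (hl : 1 <= l) :
  lds_length (Zperm k l)
    (if ~~ odd l then (k + 1) * k ^ (l./2 - 1) - 1
     else 2 * k ^ ((l - 1)./2) - 1).
Proof.
have el := odd_double_half l.
case: (boolP (odd l)) => ho; last first.
  rewrite (negbTE ho) in el; rewrite /=.
  rewrite add0n in el.
  have hm : 0 < l./2 by move: hl; rewrite -el; case: (l./2).
  set m := l./2 in el hm.
  have e : l = m.-1.+2 + m.-1 by rewrite -el; clearbody m; lia.
  rewrite -/m; have em : m = m.-1.+1 by rewrite (prednK hm).
  rewrite e.
  have -> : (k + 1) * k ^ (m - 1) - 1 = k ^ m.-1.+1 + k ^ m.-1 - 1.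
    by rewrite !subn1 mulnDl mul1n expnS.
  split; first exact: even_case.
  by move=> t ht; apply: upper.
rewrite ho in el; rewrite /=.
  set m := l./2 in el.
  have e : l = m.+1 + m by rewrite -el add1n addSn addnn.
  have -> : (l - 1)./2 = m by rewrite -el add1n subn1 /= doubleK.
  rewrite e mul2n -addnn; split; first exact: odd_case.
  by move=> t ht; apply: upper.
Qed.
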